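(* Let $\lambda$ be a partition of $n$ and let $\lambda(\cdot)$ denote Young's orthogonal representation of $S_n$ on the space with orthonormal basis $\{\ket{T}\}$ indexed by standard Young tableaux $T$ of shape $\lambda$. Let $A=\{a_1,\dots,a_k\}\subseteq\{1,\dots,n\}$ be a set of consecutive integers, let $S_A\le S_n$ be the symmetric group permuting the elements of $A$ (fixing all others), and let $\lambda(S_A)=\sum_{\pi\in S_A}\lambda(\pi)$. If $T$ is a standard Young tableau of shape $\lambda$ containing two elements of $A$ in the same column, then $\lambda(S_A)\ket{T}=0$.
   Context: A standard Young tableau (SYT) of shape $\lambda\vdash n$ is a filling of the Young diagram of $\lambda$ with $1,\dots,n$, each used once, strictly increasing along rows (left to right) and down columns. Young's orthogonal representation is determined by the action of adjacent transpositions $(k,k+1)$ on SYTs: if $k$ and $k+1$ lie in the same row of $T$, then $(k,k+1)\ket{T}=\ket{T}$; if they lie in the same column, $(k,k+1)\ket{T}=-\ket{T}$; otherwise $(k,k+1)\ket{T}=a\ket{T}+\sqrt{1-a^2}\,\ket{(k,k+1)T}$ and $(k,k+1)\ket{(k,k+1)T}=\sqrt{1-a^2}\,\ket{T}-a\ket{(k,k+1)T}$, where $(k,k+1)T$ is the SYT obtained from $T$ by swapping the entries $k$ and $k+1$, and $a$ is the reciprocal of the axial distance in $T$ between the box containing $k$ and the box containing $k+1$ (the signed number of steps: up steps plus right steps minus left steps minus down steps, from the box of $k$ to the box of $k+1$). *)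

(* Defs.v *)
From HB Require Import structures.
From mathcomp Require Import all_boot all_order all_algebra all_fingroup.
Set Implicit Arguments. Unset Strict Implicit. Unset Printing Implicit Defensive.
Import Order.TTheory GRing.Theory Num.Theory.

(* Entries 1..n of a tableau are encoded as the ordinals 0..n-1 of 'I_n
   (entry k+1 is the ordinal k).  A tableau is encoded by the position
   function: t i = (row, column) of the box containing entry i, rows and
   columns numbered from 0, rows going downward. *)
Definition tab (n : nat) := {ffun 'I_n -> 'I_n * 'I_n}.

Definition is_partition (n : nat) (la : seq nat) : bool :=
  [&& sorted geq la, all (fun p => 0 < p) la & sumn la == n].

Definition in_shape (n : nat) (la : seq nat) (b : 'I_n * 'I_n) : bool :=
  (b.1 < size la) && (b.2 < nth 0 la b.1).

(* standard Young tableau of shape la: a bijective filling of the diagram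
   (injective into the diagram, which has n = sumn la boxes), strictly
   increasing along rows and down columns *)
Definition is_syt (n : nat) (la : seq nat) (t : tab n) : bool :=
  [&& injectiveb t,
      [forall i, in_shape la (t i)],
      [forall i, forall j, (((t i).1 == (t j).1) && ((t i).2 < (t j).2)) ==> (i < j)]
    & [forall i, forall j, (((t i).2 == (t j).2) && ((t i).1 < (t j).1)) ==> (i < j)]].

Definition syt (n : nat) (la : seq nat) := {t : tab n | is_syt la t}.

Local Open Scope ring_scope.

(* Coefficient of |U> in (i,j)|T>, for j = i+1, in Young's orthogonal form. *)
Definition adj_coef (R : rcfType) (n : nat) (la : seq nat) (i j : 'I_n)
    (T U : syt n la) : R :=
  let t := val T in
  let u := val U in
  if (t i).1 == (t j).1 then (U == T)%:R
  else if (t i).2 == (t j).2 then - (U == T)%:R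
  else
    (* axial distance from the box of i to the box of j:
       right steps + up steps - left steps - down steps *)
    let d : int := ((t j).2%:Z - (t j).1%:Z) - ((t i).2%:Z - (t i).1%:Z) in
    let a : R := (d%:~R)^-1 in
    a * (U == T)%:R
    + Num.sqrt (1 - a ^+ 2) * (u == [ffun x => t (tperm i j x)])%:R.

(* rho p T U = coefficient of |U> in lambda(p)|T>.  rho is Young's orthogonal
   representation: a group homomorphism (mathcomp: (p * q) x = q (p x), so
   lambda(p*q) = lambda(q) lambda(p)) whose values on adjacent
   transpositions are given by the rule above. *)
Definition is_young_orthogonal_rep (R : rcfType) (n : nat) (la : seq nat)
    (rho : {perm 'I_n} -> syt n la -> syt n la -> R) : Prop :=
  [/\ forall T U, rho 1%g T U = (T == U)%:R,
      forall (p q : {perm 'I_n}) T U,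
        rho (p * q)%g T U = \sum_(W : syt n la) rho p T W * rho q W U
    & forall (i j : 'I_n), nat_of_ord j = i.+1 ->
        forall T U, rho (tperm i j) T U = adj_coef R i j T U].

Definition consecutive (n : nat) (A : {set 'I_n}) : Prop :=
  forall x y z : 'I_n, x \in A -> z \in A -> (x <= y)%N -> (y <= z)%N -> y \in A.

Definition sym_on (n : nat) (A : {set 'I_n}) : {set {perm 'I_n}} :=
  [set p : {perm 'I_n} | perm_on A p].

(* Main.v *)
Require Import Defs.
From HB Require Import structures.
From mathcomp Require Import all_boot all_order all_algebra all_fingroup.
From mathcomp Require Import zify ring lra.
Import Order.TTheory GRing.Theory Num.Theory.

Lemma sum_ltn_min (n m : nat) : \sum_(i < n) ((i < m)%N : nat) = minn n m.
Proof.
elim: n => [|n IH]; first by rewrite big_ord0 min0n.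
rewrite big_ord_recr /= IH.
case: (ltnP n m) => H /=; lia.
Qed.

Lemma sum_nth_le (s : seq nat) (m : nat) : (\sum_(r < m) nth 0 s r <= sumn s)%N.
Proof.
elim: s m => [|x s IH] m.
  by rewrite big1 // => r _; rewrite nth_nil.
case: m => [|m]; first by rewrite big_ord0.
rewrite big_ord_recl /=.
by rewrite leq_add2l; apply: IH.
Qed.

Lemma card_shape (n : nat) (la : seq nat) :
  (#|[set b : 'I_n * 'I_n | in_shape la b]| <= sumn la)%N.
Proof.
rewrite -sum1_card big_mkcond /=.
rewrite (eq_bigr (fun p : 'I_n * 'I_n => (fun (r c : 'I_n) =>
   if (r, c) \in [set b : 'I_n * 'I_n | in_shape la b] then 1%N else 0%N) p.1 p.2));
  last by case.
rewrite -(pair_bigA _ (fun (r c : 'I_n) =>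
   if (r, c) \in [set b : 'I_n * 'I_n | in_shape la b] then 1%N else 0%N)) /=.
apply: leq_trans (sum_nth_le la n).
apply: leq_sum => r _.
apply: leq_trans (_ : \sum_(c < n) ((c < nth 0 la r)%N : nat) <= _)%N.
  apply: leq_sum => c _; rewrite inE /in_shape /=.
  by case: (r < size la)%N; case: (c < nth 0 la r)%N.
by rewrite sum_ltn_min geq_minr.
Qed.

Lemma syt_surj (n : nat) (la : seq nat) (t : tab n) :
  is_partition n la -> is_syt la t ->
  forall b, in_shape la b -> exists i, t i = b.
Proof.
move=> /and3P [_ _ /eqP Hsum] /and4P [/injectiveP Hinj /forallP Hin _ _] b Hb.
have Hsub : [set t i | i in 'I_n] \subset [set b : 'I_n * 'I_n | in_shape la b].
  by apply/subsetP => z /imsetP [i _ ->]; rewrite inE.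
have : [set t i | i in 'I_n] == [set b : 'I_n * 'I_n | in_shape la b].
  rewrite eqEcard Hsub /= card_imset // card_ord.
  by apply: leq_trans (card_shape n la) _; rewrite Hsum.
move/eqP => E.
have : b \in [set t i | i in 'I_n] by rewrite E inE.
by case/imsetP => i _ ->; exists i.
Qed.

Lemma step_exists (f : nat -> nat) (x y : nat) :
  (x <= y)%N -> (f x < f y)%N -> exists k, [/\ (x <= k)%N, (k < y)%N & (f k < f k.+1)%N].
Proof.
elim: y => [|y IH] Hxy Hf.
  by move: Hxy; rewrite leqn0 => /eqP E; rewrite E ltnn in Hf.
case: (ltnP (f y) (f y.+1)) => Hy.
  case: (leqP x y) => Hx; first by exists y; split.
  have E : x = y.+1 by lia.
  by rewrite E ltnn in Hf.
case: (leqP x y) => Hx.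
  have [k [H1 H2 H3]] := IH Hx (leq_trans Hf Hy).
  by exists k; split => //; apply: ltnW.
have E : x = y.+1 by lia.
by rewrite E ltnn in Hf.
Qed.

Definition phi {n : nat} (t : tab n) : nat := \sum_(i : 'I_n) i * (t i).1.

Lemma phi_swap (n : nat) (t : tab n) (k k' : 'I_n) : nat_of_ord k' = k.+1 ->
  (phi [ffun z => t (tperm k k' z)] + (t k').1 = phi t + (t k).1)%N.
Proof.
move=> Hk.
have kk : k' != k by apply/eqP => E; move: Hk; rewrite E; lia.
rewrite /phi.
rewrite (reindex_inj (@perm_inj _ (tperm k k'))) /=.
under eq_bigr do rewrite ffunE tpermK.
rewrite (bigD1 k) // (bigD1 k') //= [in RHS](bigD1 k) // [in RHS](bigD1 k') //=.
rewrite tpermL tpermR.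
rewrite (eq_bigr (fun i : 'I_n => i * (t i).1)%N); last first.
  by move=> i /andP [H1 H2]; rewrite tpermD // eq_sym.
rewrite Hk; lia.
Qed.

Local Open Scope ring_scope.

Lemma sym_onM (n : nat) (A : {set 'I_n}) (s p : {perm 'I_n}) :
  s \in sym_on A -> ((s * p)%g \in sym_on A) = (p \in sym_on A).
Proof.
rewrite !inE => hs; apply/idP/idP => h.
  by rewrite -(mulKg s p); apply: perm_onM => //; apply: perm_onV.
by apply: perm_onM.
Qed.

Lemma vinv (R : rcfType) (n : nat) (la : seq nat)
    (rho : {perm 'I_n} -> syt n la -> syt n la -> R)
    (A : {set 'I_n}) (s : {perm 'I_n}) (T U : syt n la) :
  is_young_orthogonal_rep rho -> s \in sym_on A ->
  \sum_(W : syt n la) rho s T W * (\sum_(p in sym_on A) rho p W U)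
  = \sum_(p in sym_on A) rho p T U.
Proof.
case=> _ Hmul _ hs.
under eq_bigr do rewrite big_distrr.
rewrite exchange_big /=.
under eq_bigr do rewrite -Hmul.
rewrite [RHS](reindex_inj (mulgI s)) /=.
by apply: eq_bigl => p; rewrite sym_onM.
Qed.
Local Open Scope ring_scope.

Theorem lemma1 (R : rcfType) (n : nat) (la : seq nat)
    (rho : {perm 'I_n} -> syt n la -> syt n la -> R)
    (A : {set 'I_n}) (T : syt n la) :
  is_partition n la ->
  is_young_orthogonal_rep rho ->
  consecutive A ->
  (exists x y : 'I_n, [/\ x \in A, y \in A, x != y & ((val T) x).2 = ((val T) y).2]) ->
  forall U : syt n la, \sum_(p in sym_on A) rho p T U = 0.
Proof.
move=> Hpart Hrep Hcons.
have Hrep' := Hrep; case: Hrep' => _ _ Hadj.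
suff H : forall N (T : syt n la), (phi (val T) < N)%N ->
  (exists x y : 'I_n, [/\ x \in A, y \in A, x != y & ((val T) x).2 = ((val T) y).2]) ->
  forall U : syt n la, \sum_(p in sym_on A) rho p T U = 0.
  by apply: (H (phi (val T)).+1).
elim=> [//|N IH] {}T HN [x [y [xA yA xy Hc]]] U.
set t := val T.
have HT : is_syt la t := valP T.
have HT' := HT; move/and4P: HT' => [/injectiveP Hinj /forallP Hin /forallP Hrow /forallP Hcol].
have [x0 [y0 [x0A y0A Hc0 Hr0]]] : exists x0 y0 : 'I_n,
    [/\ x0 \in A, y0 \in A, (t x0).2 = (t y0).2 & ((t x0).1 < (t y0).1)%N].
  case: (ltngtP (t x).1 (t y).1) => Hr.
  - by exists x, y; split.
  - by exists y, x; split.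
  - have E : t x = t y by apply: injective_projections => //; apply: val_inj.
    by move: xy; rewrite (Hinj _ _ E) eqxx.
have Hxy : (x0 < y0)%N.
  by move: (Hcol x0) => /forallP /(_ y0); rewrite Hc0 eqxx Hr0 /=.
pose f (m : nat) : nat := odflt 0%N (omap (fun i : 'I_n => nat_of_ord (t i).1) (insub m)).
have fE : forall i : 'I_n, f (val i) = (t i).1 by move=> i; rewrite /f valK.
have [k [Hk1 Hk2 Hk3]] : exists k, [/\ (x0 <= k)%N, (k < y0)%N & (f k < f k.+1)%N].
  by apply: step_exists; [apply: ltnW | rewrite !fE].
have kn : (k < n)%N by apply: ltn_trans (ltn_ord y0).
have kn' : (k.+1 < n)%N by apply: leq_ltn_trans (ltn_ord y0).
pose ok := Ordinal kn. pose ok' := Ordinal kn'.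
have okA : ok \in A by apply: (Hcons x0 ok y0) => //; apply: ltnW.
have okA' : ok' \in A by apply: (Hcons x0 ok' y0) => //; apply: leqW.
have Hr : ((t ok).1 < (t ok').1)%N by move: Hk3; rewrite -[k]/(val ok) -[k.+1]/(val ok') !fE.
have sA : tperm ok ok' \in sym_on A.
  rewrite inE; apply: subset_trans (tperm_on ok ok') _.
  by apply/subsetP => z; rewrite !inE => /orP [] /eqP ->.
have E := vinv R n la rho A (tperm ok ok') T U Hrep sA.
move: E.
set v := fun W => \sum_(p in sym_on A) rho p W U.
change (\sum_(W : syt n la) rho (tperm ok ok') T W * v W = v T -> v T = 0).
under eq_bigr do rewrite (Hadj ok ok' erefl).
rewrite /adj_coef /=.
have -> : ((t ok).1 == (t ok').1) = false by apply/negbTE; rewrite neq_ltn Hr.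
case: eqP => Hc2.
  rewrite (bigD1 T) //= eqxx big1 => [|W /negPf ->]; last by rewrite /= mulr0n oppr0 mul0r.
  rewrite addr0 /= mulr1n mulN1r => E; lra.
have Hcl : ((t ok').2 < (t ok).2)%N.
  case: (ltngtP (t ok').2 (t ok).2) => // H2; last first.
    by exfalso; apply: Hc2; apply: val_inj; rewrite /= H2.
  exfalso.
  have /andP [Hs1 Hs2] := Hin ok.
  have /andP [Hs1' Hs2'] := Hin ok'.
  have /and3P [Hsort _ _] := Hpart.
  have Hnth : (nth 0 la (t ok').1 <= nth 0 la (t ok).1)%N.
    have := @sorted_leq_nth _ geq (fun a b c h1 h2 => leq_trans h2 h1) leqnn 0%N la Hsort.
    by move=> /(_ (t ok).1 (t ok').1 Hs1 Hs1' (ltnW Hr)).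
  have Hb : in_shape la ((t ok).1, (t ok').2).
    by rewrite /in_shape /= Hs1 /=; apply: leq_trans Hs2' Hnth.
  have [g Hg] := syt_surj n la t Hpart HT _ Hb.
  move: (Hrow ok) => /forallP /(_ g); rewrite Hg /= eqxx H2 /= => H3.
  move: (Hcol g) => /forallP /(_ ok'); rewrite Hg /= eqxx Hr /= => H4.
  by move: H3 H4; rewrite /= ; lia.
set a := (_%:~R^-1).
have Ha : a < 0.
  rewrite /a invr_lt0 ltrz0.
  have key : forall a b c d : nat, (a < b)%N -> (c < d)%N -> (c%:Z - b%:Z - (d%:Z - a%:Z) < 0 :> int).
    by move=> ? ? ? ?; lia.
  exact: key Hr Hcl.
under eq_bigr do rewrite mulrDl.
rewrite big_split /=.
rewrite (bigD1 T) //= eqxx mulr1 big1 => [|W /negPf ->]; last by rewrite mulr0 mul0r.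
rewrite [X in _ + X = _]big1 => [|W _]; last first.
  case: eqP => Hw; last by rewrite mulr0 mul0r.
  rewrite /v IH ?mulr0 //.
    have P := phi_swap n t ok ok' erefl.
    rewrite -Hw in P.
    have key : forall p q a b : nat, (p + b = q + a)%N -> (q < N.+1)%N -> (a < b)%N -> (p < N)%N.
      by move=> ? ? ? ?; lia.
    exact: key P HN Hr.
  exists (tperm ok ok' x0), (tperm ok ok' y0); split.
  - by case: tpermP.
  - by case: tpermP.
  - by rewrite (inj_eq perm_inj) neq_ltn Hxy.
  - have Hw' : val W = [ffun z => t (tperm ok ok' z)] := Hw.
    by rewrite Hw' !ffunE !tpermK.
rewrite addr0 addr0 => E.
nra.
Qed.
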